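(* Let $F_1,F_2\in\mathbb{R}^{p\times n}$ and $L_1,L_2\in\mathbb{R}^{n\times m}$ be arbitrary and $s\ge1$. Define the block lower-triangular Toeplitz matrices $R_{s+n}\in\mathbb{R}^{(s+n)m\times(s+n)m}$ and $\bar R_{s+n}\in\mathbb{R}^{(s+n)p\times(s+n)m}$ with $(i,j)$ blocks $R_{i-j}$ and $\bar R_{i-j}$, where $R_k=CA_{L_2}^{k-1}(L_1-L_2)$ for $k\ge1$, $R_0=I_m$, $R_k=0$ for $k<0$, with $A_{L_2}=A-L_2C$, and $\bar R_k=(F_1-F_2)A_{F_1}^{k-1}L_1+F_2A_{L_2}^{k-1}(L_1-L_2)$ for $k\ge1$, $\bar R_k=0$ for $k\le 0$. Then $$\begin{bmatrix}\hat Y_s(F_1,L_1)\\ \hat X_s(F_1,L_1)\end{bmatrix}=\begin{bmatrix}M_s(F_2) & \hat Y_s(F_2,L_2)\\ N_s(F_2) & \hat X_s(F_2,L_2)\end{bmatrix}\begin{bmatrix}\bar R_{s+n}\\ R_{s+n}\end{bmatrix}.$$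
   Context: Consider the discrete-time LTI system $x(k+1)=Ax(k)+Bu(k)$, $y(k)=Cx(k)+Du(k)$ with $u\in\mathbb{R}^p$, $x\in\mathbb{R}^n$, $y\in\mathbb{R}^m$, $n\ge 1$, and $(A,B,C,D)$ a minimal realization. For $F\in\mathbb{R}^{p\times n}$ put $A_F=A+BF$ and $C_F=C+DF$. Finite-sample image representation: $M_s(F)\in\mathbb{R}^{sp\times(s+n)p}$, $N_s(F)\in\mathbb{R}^{sm\times(s+n)p}$ with $(l,j)$ blocks ($l=1,\dots,s$; $j=1,\dots,s+n$) $M_{n+l-j}$, $N_{n+l-j}$, where $M_k=FA_F^{k-1}B$ ($k\ge1$), $M_0=I_p$, $M_k=0$ ($k<0$), $N_k=C_FA_F^{k-1}B$ ($k\ge1$), $N_0=D$, $N_k=0$ ($k<0$). For gains $F,L$: $\hat Y_s(F,L)\in\mathbb{R}^{sp\times(s+n)m}$, $\hat X_s(F,L)\in\mathbb{R}^{sm\times(s+n)m}$ with $(l,j)$ blocks ($l=1,\dots,s$; $j=1,\dots,s+n$) $\hat Y_{n+l-j}$, $\hat X_{n+l-j}$, where $\hat Y_k=FA_F^{k-1}L$ ($k\ge1$), $\hat Y_k=0$ ($k\le0$), $\hat X_k=C_FA_F^{k-1}L$ ($k\ge1$), $\hat X_0=I_m$, $\hat X_k=0$ ($k<0$). *)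

(* Defs.v *)
From HB Require Import structures.
From mathcomp Require Import all_boot all_order all_algebra.
From mathcomp Require Import reals.
Set Implicit Arguments. Unset Strict Implicit. Unset Printing Implicit Defensive.
Import GRing.Theory Num.Theory.
Local Open Scope ring_scope.

Section Defs.
Variable R : realType.

Definition blkT (q r a b : nat) (off : int) (G : int -> 'M[R]_(q, r)) :
  'M[R]_(\sum_(i < a) q, \sum_(j < b) r) :=
  @mxblock R a b (fun _ => q) (fun _ => r)
    (fun i j => G (off + (nat_of_ord i)%:Z - (nat_of_ord j)%:Z)).

Variables (n p m : nat).

Definition AF (A : 'M[R]_n) (B : 'M[R]_(n, p)) (F : 'M[R]_(p, n)) : 'M[R]_n :=
  A + B *m F.
Definition CF (C : 'M[R]_(m, n)) (D : 'M[R]_(m, p)) (F : 'M[R]_(p, n)) :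
  'M[R]_(m, n) := C + D *m F.

(* Markov-type parameters; k = Posz k'.+1 means k >= 1 with A^(k-1) = A^k'. *)
Definition Mk A B F (k : int) : 'M[R]_p :=
  match k with
  | Posz k'.+1 => F *m (AF A B F ^+ k') *m B
  | Posz 0 => 1%:M
  | Negz _ => 0
  end.
Definition Nk A B C D F (k : int) : 'M[R]_(m, p) :=
  match k with
  | Posz k'.+1 => CF C D F *m (AF A B F ^+ k') *m B
  | Posz 0 => D
  | Negz _ => 0
  end.
Definition Yk A B F (L : 'M[R]_(n, m)) (k : int) : 'M[R]_(p, m) :=
  match k with
  | Posz k'.+1 => F *m (AF A B F ^+ k') *m L
  | _ => 0
  end.
Definition Xk A B C D F (L : 'M[R]_(n, m)) (k : int) : 'M[R]_m :=
  match k with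
  | Posz k'.+1 => CF C D F *m (AF A B F ^+ k') *m L
  | Posz 0 => 1%:M
  | Negz _ => 0
  end.

Definition Ms s A B F := @blkT p p s (s + n) n%:Z (Mk A B F).
Definition Ns s A B C D F := @blkT m p s (s + n) n%:Z (Nk A B C D F).
Definition Yhat s A B F L := @blkT p m s (s + n) n%:Z (Yk A B F L).
Definition Xhat s A B C D F L := @blkT m m s (s + n) n%:Z (Xk A B C D F L).

Definition AL (A : 'M[R]_n) (C : 'M[R]_(m, n)) (L : 'M[R]_(n, m)) : 'M[R]_n :=
  A - L *m C.

Definition Rk A C (L1 L2 : 'M[R]_(n, m)) (k : int) : 'M[R]_m :=
  match k with
  | Posz k'.+1 => C *m (AL A C L2 ^+ k') *m (L1 - L2)
  | Posz 0 => 1%:M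
  | Negz _ => 0
  end.
Definition Rbk A B C (F1 F2 : 'M[R]_(p, n)) (L1 L2 : 'M[R]_(n, m)) (k : int) :
  'M[R]_(p, m) :=
  match k with
  | Posz k'.+1 => (F1 - F2) *m (AF A B F1 ^+ k') *m L1
                  + F2 *m (AL A C L2 ^+ k') *m (L1 - L2)
  | _ => 0
  end.

Definition RT s A C L1 L2 := @blkT m m (s + n) (s + n) 0 (Rk A C L1 L2).
Definition RbT s A B C F1 F2 L1 L2 :=
  @blkT p m (s + n) (s + n) 0 (Rbk A B C F1 F2 L1 L2).

Definition controllable (A : 'M[R]_n) (B : 'M[R]_(n, p)) : bool :=
  \rank (@mxrow R n (fun _ => p) n (fun k => A ^+ k *m B)) == n.
Definition observable (A : 'M[R]_n) (C : 'M[R]_(m, n)) : bool :=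
  \rank (@mxcol R n (fun _ => m) n (fun k => C *m A ^+ k)) == n.
Definition minimal_realization A B C : bool := controllable A B && observable A C.

End Defs.

(* Main.v *)
Require Import Defs.
From HB Require Import structures.
From mathcomp Require Import all_boot all_order all_algebra.
From mathcomp Require Import reals.
From mathcomp Require Import zify.
Import GRing.Theory Num.Theory.
Local Open Scope ring_scope.
Set Implicit Arguments. Unset Strict Implicit.
Lemma mxexpS (R : pzRingType) (n k : nat) (P : 'M[R]_n) : P ^+ k.+1 = P *m P ^+ k.
Proof. exact: exprS. Qed.
Lemma mxexpSr (R : pzRingType) (n k : nat) (P : 'M[R]_n) : P ^+ k.+1 = P ^+ k *m P.
Proof. exact: exprSr. Qed.

Lemma telesc (R : pzRingType) (n e : nat) (P S : 'M[R]_n) :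
  \sum_(u < e) P ^+ (e - u.+1) *m (S - P) *m S ^+ u = S ^+ e - P ^+ e.
Proof.
elim: e => [|e IH]; first by rewrite big_ord0 !expr0 subrr.
rewrite big_ord_recr /= subnn expr0 mul1mx.
rewrite (eq_bigr (fun u : 'I_e => P *m (P ^+ (e - u.+1) *m (S - P) *m S ^+ u))); last first.
  move=> i _; rewrite !mulmxA -mxexpS; congr (_ ^+ _ *m _ *m _).
  have := ltn_ord i; lia.
rewrite -mulmx_sumr IH mulmxBr mulmxBl -!mxexpS.
by rewrite addrC addrA subrK.
Qed.

Lemma telesc2 (R : pzRingType) (n e : nat) (P Q : 'M[R]_n) :
  \sum_(u < e) P ^+ (e - u.+1) *m (P - Q) *m Q ^+ u = P ^+ e - Q ^+ e.
Proof.
rewrite -(opprB Q P) -[RHS]opprB -(telesc e P Q) -sumrN.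
by apply: eq_bigr => i _; rewrite mulmxN mulNmx.
Qed.

Lemma zm (V : zmodType) (a b c h g : V) :
  a + (b + c + (h + g)) = a + (c + g) + b + h.
Proof. by rewrite !addrA (addrAC _ h g) (addrAC a b c) (addrAC (a + c) b g). Qed.
Lemma negz_sub (x y : nat) : (x < y)%N -> x%:Z - y%:Z = Negz (y - x.+1).
Proof. move=> h; rewrite NegzE; lia. Qed.

Lemma conv (R : pzRingType) a b c N (G : int -> 'M[R]_(a,b)) (H : int -> 'M[R]_(b,c))
  (I J : nat) :
 (forall k, G (Negz k) = 0) -> (forall k, H (Negz k) = 0) -> (I < N)%N ->
 \sum_(k < N) G (I%:Z - (k : nat)%:Z) *m H ((k : nat)%:Z - J%:Z) =
 if (J <= I)%N then \sum_(u < (I - J).+1) G ((I - J - u)%N%:Z) *m H (u%:Z) else 0.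
Proof.
move=> G0 H0 hIN; case: leqP => hJI; last first.
  apply: big1 => k _; case: (ltnP k J) => hk.
    by rewrite (negz_sub hk) H0 mulmx0.
  by rewrite (@negz_sub I k) ?G0 ?mul0mx //; lia.
rewrite -(big_mkord xpredT (fun k => G (I%:Z - k%:Z) *m H (k%:Z - J%:Z))).
rewrite (@big_cat_nat _ _ _ J) //=; last by lia.
rewrite (@big_cat_nat _ _ _ I.+1 J) //=; last by lia.
rewrite [X in X + _]big_nat_cond [X in X + _]big1; last first.
  by move=> k /andP[/andP[_ hk] _]; rewrite (negz_sub hk) H0 mulmx0.
rewrite [X in _ + (_ + X)]big_nat_cond [X in _ + (_ + X)]big1; last first.
  by move=> k /andP[/andP[hk _] _]; rewrite (negz_sub hk) G0 mul0mx.
rewrite add0r addr0 -{1}(add0n J) big_addn big_mkord.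
have -> : (I.+1 - J = (I - J).+1)%N by lia.
apply: eq_bigr => u _; congr (G _ *m H _); have := ltn_ord u; lia.
Qed.
Lemma conv0 (R : pzRingType) a b c N (G : int -> 'M[R]_(a,b)) (H : int -> 'M[R]_(b,c))
  (I J : nat) :
 (forall k, G (Negz k) = 0) -> (forall k, H (Negz k) = 0) -> (I < N)%N ->
 \sum_(k < N) G (I%:Z - (k : nat)%:Z) *m H (0 + (k : nat)%:Z - J%:Z) =
 if (J <= I)%N then \sum_(u < (I - J).+1) G ((I - J - u)%N%:Z) *m H (u%:Z) else 0.
Proof.
move=> G0 H0 hIN; rewrite -(@conv R a b c N G H I J G0 H0 hIN); apply: eq_bigr => k _; by rewrite add0r.
Qed.

Lemma core (R : pzRingType) (n p m q : nat) (P Q S : 'M[R]_n) (B : 'M_(n,p))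
 (C : 'M_(m,n)) (F1 F2 : 'M_(p,n)) (L1 L2 : 'M_(n,m)) (G : 'M_(q,n))
 (H : 'M_(q,p)) (E : 'M_(q,m))
 (K : nat -> 'M_(q,p)) (Z : nat -> 'M_(q,m)) (Rb : nat -> 'M_(p,m)) (Rr : nat -> 'M_m) :
 K 0%N = H -> (forall t, K t.+1 = G *m P^+t *m B) ->
 Z 0%N = E -> (forall t, Z t.+1 = G *m P^+t *m L2) ->
 Rb 0%N = 0 -> (forall t, Rb t.+1 = (F1-F2) *m S^+t *m L1 + F2 *m Q^+t *m (L1-L2)) ->
 Rr 0%N = 1%:M -> (forall t, Rr t.+1 = C *m Q^+t *m (L1-L2)) ->
 S = P + B *m (F1 - F2) -> P = Q + (B *m F2 + L2 *m C) -> G = H *m F2 + E *m C ->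
 forall d, \sum_(u < d.+1) (K (d - u)%N *m Rb u + Z (d - u)%N *m Rr u)
   = if d is e.+1 then (H *m F1 + E *m C) *m S^+e *m L1 else E.
Proof.
move=> K0 KS Z0 ZS Rb0 RbS Rr0 RrS eS eP eG [|e].
  by rewrite big_ord1 subn0 K0 Z0 Rb0 Rr0 mulmx0 mulmx1 add0r.
rewrite big_ord_recl subn0 Rb0 Rr0 mulmx0 add0r mulmx1 ZS.
rewrite big_ord_recr /= subnn K0 Z0 RbS RrS.
rewrite (eq_bigr (fun u : 'I_e => G *m (P ^+ (e - u.+1) *m (S - P) *m S ^+ u) *m L1
   + G *m (P ^+ (e - u.+1) *m (P - Q) *m Q ^+ u) *m (L1 - L2))); last first.
  move=> i _.
  have -> : (e.+1 - (widen_ord (leqnSn e) i).+1 = (e - i.+1).+1)%N.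
    by rewrite /=; have := ltn_ord i; lia.
  rewrite KS ZS RbS RrS.
  have dS : S - P = B *m (F1 - F2) by rewrite eS addrC addKr.
  have dP : P - Q = B *m F2 + L2 *m C by rewrite eP addrC addKr.
  rewrite dS dP; move: (F1 - F2) (L1 - L2) (P ^+ _) (S ^+ _) (Q ^+ _) => DF DL X Y W.
  by rewrite !mulmxDr !mulmxDl !mulmxA (mulmxDr G) mulmxDl !mulmxA addrA.
rewrite big_split /= -!mulmx_suml -!mulmx_sumr telesc telesc2.
set T := S ^+ e; set U := P ^+ e; set V := Q ^+ e; set DL := L1 - L2.
have h1 : H *m (F2 *m V *m DL) + E *m (C *m V *m DL) = G *m V *m DL.
  by rewrite eG !mulmxDl !mulmxA.
rewrite mulmxDr -[_ + _ + E *m _]addrA h1 zm.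
have h2 : G *m U *m L2 + (G *m (U - V) *m DL + G *m V *m DL) = G *m U *m L1.
  by rewrite -mulmxDl -mulmxDr subrK -mulmxDr addrC subrK.
rewrite h2 -mulmxDl -mulmxDr (addrC U) subrK.
rewrite !mulmxA -!mulmxDl; congr (_ *m _ *m _).
by rewrite eG mulmxBr addrC addrA subrK.
Qed.

Theorem lemma5 (R : realType) (n p m s : nat)
  (A : 'M[R]_n) (B : 'M[R]_(n, p)) (C : 'M[R]_(m, n)) (D : 'M[R]_(m, p))
  (F1 F2 : 'M[R]_(p, n)) (L1 L2 : 'M[R]_(n, m)) :
  (1 <= n)%N -> (1 <= s)%N -> minimal_realization A B C ->
  col_mx (Yhat s A B F1 L1) (Xhat s A B C D F1 L1)
  = block_mx (Ms s A B F2) (Yhat s A B F2 L2)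
             (Ns s A B C D F2) (Xhat s A B C D F2 L2)
    *m col_mx (RbT s A B C F1 F2 L1 L2) (RT s A C L1 L2).
Proof.
move=> _ _ _.
have eS : AF A B F1 = AF A B F2 + B *m (F1 - F2).
  by rewrite /AF -addrA -mulmxDr (addrC F2) subrK.
have eP : AF A B F2 = AL A C L2 + (B *m F2 + L2 *m C).
  by rewrite /AF /AL (addrC (B *m F2)) addrA subrK.
rewrite /Ms /Ns /Yhat /Xhat /RbT /RT mul_block_col.
congr col_mx; rewrite /blkT !mul_mxblock -mxblockD; apply: eq_mxblock => i j;
  rewrite -!PoszD;
  (have hI : (n + i < s + n)%N by have := ltn_ord i; lia);
  rewrite !conv0 //; (case: ifP => hji; last first);
  try (by move/negbT: hji; rewrite -ltnNge => hji; rewrite (negz_sub hji) addr0);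
  rewrite -big_split /= (_ : (n + i)%:Z - j%:Z = (n + i - j)%N%:Z); try lia;
  move: (n + i - j)%N => d.
- rewrite (@core R n p m p (AF A B F2) (AL A C L2) (AF A B F1) B C F1 F2 L1 L2 F2 1%:M 0
    (fun t => Mk A B F2 t%:Z) (fun t => Yk A B F2 L2 t%:Z)
    (fun t => Rbk A B C F1 F2 L1 L2 t%:Z) (fun t => Rk A C L1 L2 t%:Z)) //;
    last by rewrite mul1mx mul0mx addr0.
  by case: d => [|e] //=; rewrite mul1mx mul0mx addr0.
- rewrite (@core R n p m m (AF A B F2) (AL A C L2) (AF A B F1) B C F1 F2 L1 L2 (CF C D F2) D 1%:M
    (fun t => Nk A B C D F2 t%:Z) (fun t => Xk A B C D F2 L2 t%:Z)
    (fun t => Rbk A B C F1 F2 L1 L2 t%:Z) (fun t => Rk A C L1 L2 t%:Z)) //;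
    last by rewrite /CF mul1mx addrC.
  by case: d => [|e] //=; rewrite mul1mx addrC.
Qed.
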